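(* Assume the setting of the context and fix $\epsilon_2>0$. Consider any (finite or infinite) sequence of subdivision operations applied to the interval partitions. Then after finitely many subdivisions, $\hat{\mathcal{P}}(\epsilon_2)$ becomes invariant to further subdivision: there is $N$ such that every subdivision after the $N$-th leaves $\hat{\mathcal{P}}(\epsilon_2)$ (as a function of $\theta$) unchanged.
   Context: For $t\in[0,T]$ and trajectory parameters $\theta$, the robot pieces $b_{ij}(t,\theta)\subset\mathbb{R}^3$ and obstacle pieces $o_k\subset\mathbb{R}^3$ are given (finitely many triples $(i,j,k)$); $\text{dist}$ is the shortest Euclidean distance between sets and $d_0\ge0$. $\mathcal{P}$ is a barrier function on $(0,\infty)$, and $\mathcal{P}_{ijk}(t,\theta)=\mathcal{P}(\text{dist}(b_{ij}(t,\theta),o_k)-d_0)$. For each triple $(i,j,k)$ there is a finite partition of $[0,T]$ into closed intervals $[T_0^l,T_1^l]$ (indexed by $l$); a subdivision replaces one interval $[T_0^l,T_1^l]$ of one triple's partition by $[T_0^l,(T_0^l+T_1^l)/2]$ and $[(T_0^l+T_1^l)/2,T_1^l]$. Let $\mathcal{P}_{ijkl}(\theta)=\mathcal{P}_{ijk}((T_0^l+T_1^l)/2,\theta)$. The hybrid penalty is $$\hat{\mathcal{P}}(\epsilon_2)=\sum_{ijkl}\begin{cases}(T_1^l-T_0^l)\mathcal{P}_{ijkl}&T_1^l-T_0^l\ge\epsilon_2\\ \int_{T_0^l}^{T_1^l}\mathcal{P}_{ijk}(t,\theta)\,dt&T_1^l-T_0^l<\epsilon_2,\end{cases}$$ the sum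 running over all triples and all intervals of their current partitions. *)

(* Defs.v *)
From HB Require Import structures.
From mathcomp Require Import all_boot all_order all_algebra.
From mathcomp Require Import all_classical all_reals all_analysis.
Set Implicit Arguments. Unset Strict Implicit. Unset Printing Implicit Defensive.
Import Order.TTheory GRing.Theory Num.Theory.
Import numFieldNormedType.Exports.
Local Open Scope classical_set_scope.
Local Open Scope ring_scope.

Section Defs.
Variable R : realType.

Definition pt3 := 'rV[R]_3.

Definition euclid (x y : pt3) : R :=
  Num.sqrt (\sum_(i < 3) (x ord0 i - y ord0 i) ^+ 2).

Definition dist (A B : set pt3) : R :=
  inf [set euclid x y | x in A & y in B].

Definition is_barrier (P : R -> R) : Prop :=
  {within `]0, +oo[, continuous P} /\ (P x @[x --> 0^'+] --> +oo).

Definition Pijk {Theta IJ K : Type} (P : R -> R) (d0 : R)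
  (b : IJ -> R -> Theta -> set pt3) (o : K -> set pt3)
  (tr : IJ * K) (t : R) (th : Theta) : R :=
  P (dist (b tr.1 t th) (o tr.2) - d0).

(* A partition of [0,T] into closed intervals, given by its breakpoints
   0 = s_0 < s_1 < ... < s_m = T (m >= 1); interval l is [s_l, s_(l+1)]. *)
Definition is_partition (T : R) (s : seq R) : Prop :=
  [/\ (1 < size s)%N, head 0 s = 0, last 0 s = T & sorted <%R s].

Definition subdiv (s : seq R) (l : nat) : seq R :=
  take l.+1 s ++ ((nth 0 s l + nth 0 s l.+1) / 2) :: drop l.+1 s.

Definition hyb_term (eps2 : R) (f : R -> R) (T0 T1 : R) : R :=
  if eps2 <= T1 - T0 then (T1 - T0) * f ((T0 + T1) / 2)
  else Rintegral lebesgue_measure `[T0, T1] f.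

Definition hyb_sum (eps2 : R) (f : R -> R) (s : seq R) : R :=
  \sum_(l < (size s).-1) hyb_term eps2 f (nth 0 s l) (nth 0 s l.+1).

Definition hybrid_penalty {Theta : Type} {Tr : finType} (S : {set Tr})
  (F : Tr -> R -> Theta -> R) (eps2 : R) (parts : Tr -> seq R) : Theta -> R :=
  fun th => \sum_(tr in S) hyb_sum eps2 (fun t => F tr t th) (parts tr).

(* one step of a (finite or infinite) sequence of subdivision operations:
   None = no further operation, Some (tr, l) = subdivide interval l of the
   partition of triple tr *)
Definition step {Tr : eqType} (parts : Tr -> seq R) (op : option (Tr * nat))
  : Tr -> seq R :=
  match op with
  | None => parts
  | Some (tr, l) => fun tr' => if tr' == tr then subdiv (parts tr) l else parts tr'
  end.

Fixpoint states {Tr : eqType} (parts0 : Tr -> seq R) (ops : nat -> option (Tr * nat))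
  (n : nat) : Tr -> seq R :=
  match n with
  | 0 => parts0
  | n'.+1 => step (states parts0 ops n') (ops n')
  end.

End Defs.

(* Main.v *)
Require Import Defs.
From HB Require Import structures.
From mathcomp Require Import all_boot all_order all_algebra.
From mathcomp Require Import all_classical all_reals all_analysis.
From mathcomp Require Import lra.
Import Order.TTheory GRing.Theory Num.Theory.
Import numFieldNormedType.Exports.
Local Open Scope classical_set_scope.
Local Open Scope ring_scope.

Section H.
Set Implicit Arguments.
Context {R : realType}.

Fixpoint ps (g : R -> R -> R) (x : R) (s : seq R) : R :=
  if s is y :: t then g x y + ps g y t else 0.
Definition G (g : R -> R -> R) (s : seq R) : R :=
  \sum_(i < (size s).-1) g (nth 0 s i) (nth 0 s i.+1).

Lemma G_cons g x t : G g (x :: t) = ps g x t.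
Proof.
elim: t x => [|y t IH] x /=; first by rewrite /G big_ord0.
rewrite /G /= big_ord_recl /= -IH /G /=; congr (_ + _).

Qed.

Lemma ps_cat g x u v : ps g x (u ++ v) = ps g x u + ps g (last x u) v.
Proof. by elim: u x => [|y u IH] x /=; [rewrite add0r | rewrite IH addrA]. Qed.

Lemma last_take x t l : (l <= size t)%N -> last x (take l t) = nth (0:R) (x :: t) l.
Proof.
elim: t l x => [|y t IH] [|l] x hl; try reflexivity.
  exfalso; move: hl; by rewrite ltn0.
exact: (IH l y hl).
Qed.

Lemma ps_cons g x y t : ps g x (y :: t) = g x y + ps g y t.
Proof. reflexivity. Qed.

Lemma G_subdiv g x t l : (l < size t)%N ->
  G g (subdiv (x :: t) l) =
  G g (x :: t) - g (nth 0 (x::t) l) (nth 0 (x::t) l.+1)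
  + g (nth 0 (x::t) l) ((nth 0 (x::t) l + nth 0 (x::t) l.+1) / 2)
  + g ((nth 0 (x::t) l + nth 0 (x::t) l.+1) / 2) (nth 0 (x::t) l.+1).
Proof.
move=> hl; rewrite /subdiv [take _ _]/= [drop _ _]/= [_ ++ _]/= !G_cons.
have -> : nth 0 (x :: t) l.+1 = nth 0 t l by reflexivity.
rewrite -[in ps g x t](cat_take_drop l t) !ps_cat (drop_nth 0 hl).
rewrite last_take; last exact: ltnW.
rewrite !ps_cons.
set A := nth 0 (x :: t) l. set B := nth 0 t l.
set P := ps g x (take l t). set Q := ps g B (drop l.+1 t).
lra.
Qed.

Lemma path_bounds (x : R) t : path <%R x t -> all (fun y => x <= y <= last x t) (x :: t).
Proof.
elim: t x => [|y t IH] x /=; first by rewrite lexx.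
move=> /andP[xy /IH /= /andP[/andP[_ yl] H]].
rewrite lexx /= (le_trans (ltW xy) yl) yl (ltW xy) /=.
apply/allP => z zt; have /andP[yz zl] := allP H z zt.
by rewrite zl (le_trans (ltW xy) yz).
Qed.

Lemma hyb_sumE (eps2 : R) f s : hyb_sum eps2 f s = G (hyb_term eps2 f) s.
Proof. reflexivity. Qed.

Lemma sumD1_eq (I : finType) (S : {set I}) i (u v : I -> R) : i \in S ->
  (forall j, j \in S -> j != i -> u j = v j) ->
  \sum_(j in S) u j = u i - v i + \sum_(j in S) v j.
Proof.
move=> iS h; rewrite (bigD1 i iS) [in RHS](bigD1 i iS) /=.
rewrite (eq_bigr (fun j => v j)); last by move=> j /andP[jS ji]; exact: h.
lra.
Qed.

Lemma hyb_split (eps2 T : R) f a b : 0 < eps2 -> b - a < eps2 ->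
  0 <= a <= T -> 0 <= b <= T ->
  lebesgue_measure.-integrable `[0, T] (fun t => (f t)%:E) ->
  hyb_term eps2 f a ((a + b) / 2) + hyb_term eps2 f ((a + b) / 2) b = hyb_term eps2 f a b.
Proof.
move=> e0 hab /andP[a0 aT] /andP[b0 bT] hint.
rewrite /hyb_term.
have h1 : ~~ (eps2 <= (a + b) / 2 - a) by rewrite -ltNge; lra.
have h2 : ~~ (eps2 <= b - (a + b) / 2) by rewrite -ltNge; lra.
have h3 : ~~ (eps2 <= b - a) by rewrite -ltNge; lra.
rewrite (negbTE h1) (negbTE h2) (negbTE h3).
have [ab|ba] := leP a b.
  have iab : lebesgue_measure.-integrable `[a, b] (EFin \o f).
    apply: integrableS hint => //.
    move=> z /=; rewrite !in_itv /= => /andP[az zb].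
    apply/andP; split; lra.
  have := @Rintegral_itvB R f (BLeft a) (BRight b) ((a + b) / 2) iab.
  rewrite !bnd_simp => H.
  have {H} H := H ltac:(lra) ltac:(lra).
  rewrite Rintegral_itv_obnd_cbnd in H; last first.
    apply: integrableS iab => //.
    move=> z /=; rewrite !in_itv /= => /andP[az zb].
    apply/andP; split; lra.
  rewrite -H; lra.
rewrite !set_itv_ge ?Rintegral_set0 ?addr0 //; rewrite bnd_simp -ltNge; lra.
Qed.
End H.

Section P.
Set Implicit Arguments.
Context {R : realType}.
Definition cpot (eps2 : R) (a b : R) : R :=
  if eps2 <= b - a then 2 * (b - a) - eps2 else 0.

Lemma cpot_ge0 eps2 a b : 0 < eps2 -> 0 <= cpot eps2 a b.
Proof. move=> e0; rewrite /cpot; case: ifP => h //; lra. Qed.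

Lemma cpot_short eps2 a b : 0 < eps2 -> b - a < eps2 ->
  cpot eps2 a ((a + b) / 2) + cpot eps2 ((a + b) / 2) b = cpot eps2 a b.
Proof.
move=> e0 hab; rewrite /cpot.
have h1 : ~~ (eps2 <= (a + b) / 2 - a) by rewrite -ltNge; lra.
have h2 : ~~ (eps2 <= b - (a + b) / 2) by rewrite -ltNge; lra.
have h3 : ~~ (eps2 <= b - a) by rewrite -ltNge; lra.
by rewrite (negbTE h1) (negbTE h2) (negbTE h3) addr0.
Qed.

Lemma cpot_long eps2 a b : 0 < eps2 -> eps2 <= b - a ->
  cpot eps2 a ((a + b) / 2) + cpot eps2 ((a + b) / 2) b <= cpot eps2 a b - eps2.
Proof.
move=> e0 hab; rewrite /cpot hab.
have -> : (a + b) / 2 - a = (b - a) / 2 by lra.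
have -> : b - (a + b) / 2 = (b - a) / 2 by lra.
case: ifP => h; lra.
Qed.
End P.

Theorem lemma3 (R : realType) (T : R) (Theta : Type) (IJ K : finType)
  (b : IJ -> R -> Theta -> set (pt3 R)) (o : K -> set (pt3 R))
  (d0 : R) (P : R -> R) (S : {set IJ * K}) (eps2 : R)
  (parts0 : IJ * K -> seq R) (ops : nat -> option ((IJ * K) * nat)) :
  0 <= d0 ->
  is_barrier P ->
  (* the penalty integrals are well defined *)
  (forall tr th, tr \in S ->
     lebesgue_measure.-integrable `[0, T] (fun t => (Pijk P d0 b o tr t th)%:E)) ->
  (forall tr, is_partition T (parts0 tr)) ->
  (* every operation subdivides an existing interval *)
  (forall n tr l, ops n = Some (tr, l) ->
     (l.+1 < size (states parts0 ops n tr))%N) ->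
  0 < eps2 ->
  exists N : nat, forall n : nat, (N <= n)%N ->
    hybrid_penalty S (Pijk P d0 b o) eps2 (states parts0 ops n.+1)
    = hybrid_penalty S (Pijk P d0 b o) eps2 (states parts0 ops n).
Proof.
move=> _ _ hint hpart hops e0.
set F := Pijk P d0 b o.
set st := states parts0 ops.
pose pen n := hybrid_penalty S F eps2 (st n).
pose Phi n := \sum_(tr in S) G (cpot eps2) (st n tr).
have hs : forall n, st n.+1 = step (st n) (ops n) by [].
have inv : forall n tr, all (fun x => 0 <= x <= T) (st n tr).
  elim=> [|n IH] tr.
    have [hsz h0 hl hsort] := hpart tr.
    rewrite /st /=.
    move: hsz h0 hl hsort; case: (parts0 tr) => [|x t] // _ h0 hl hsort.
    have := @path_bounds _ x t hsort.
    have -> : last x t = T by exact: hl.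
    have -> : x = 0 by exact: h0.
    by [].
  rewrite hs; case E: (ops n) => [[tr0 l]|]; last exact: IH.
  rewrite /step; case: (tr == tr0); last exact: IH.
  have hl := hops n tr0 l E.
  have H0 := IH tr0.
  have H12 := H0; rewrite -(cat_take_drop l.+1 (st n tr0)) all_cat in H12.
  case/andP: H12 => H1 H2.
  rewrite /subdiv all_cat H1 /= H2 andbT.
  have /andP[a0 aT] := allP H0 _ (mem_nth 0 (ltnW hl)).
  have /andP[b0 bT] := allP H0 _ (mem_nth 0 hl).
  apply/andP; split; lra.
have step : forall n, Phi n.+1 <= Phi n /\ (pen n.+1 = pen n \/ Phi n.+1 <= Phi n - eps2).
  move=> n.
  case E: (ops n) => [[tr l]|]; last first.
    rewrite /Phi /pen hs E /=; split; [exact: lexx | by left].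
  have hl : (l.+1 < size (st n tr))%N := hops n tr l E.
  have eqo : forall tr', tr' != tr -> st n.+1 tr' = st n tr'.
    by move=> tr' /negbTE h; rewrite hs E /= h.
  have eqs : st n.+1 tr = subdiv (st n tr) l by rewrite hs E /= eqxx.
  case trS: (tr \in S); last first.
    have PhiE : Phi n.+1 = Phi n.
      apply: eq_bigr => tr' tr'S; rewrite eqo //.
      by apply: contraTneq tr'S => ->; rewrite trS.
    have penE : pen n.+1 = pen n.
      apply: funext => th; apply: eq_bigr => tr' tr'S; rewrite eqo //.
      by apply: contraTneq tr'S => ->; rewrite trS.
    by rewrite PhiE; split; [exact: lexx | left].
  have PhiE : Phi n.+1 = G (cpot eps2) (st n.+1 tr) - G (cpot eps2) (st n tr) + Phi n.
    by apply: sumD1_eq => // j _ jtr; rewrite eqo.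
  have penE : forall th, pen n.+1 th =
      hyb_sum eps2 (fun t => F tr t th) (st n.+1 tr)
      - hyb_sum eps2 (fun t => F tr t th) (st n tr) + pen n th.
    by move=> th; apply: sumD1_eq => // j _ jtr; rewrite eqo.
  have H0 := inv n tr.
  rewrite eqs in PhiE penE.
  move: hl H0 PhiE penE; case: (st n tr) => [|x t] // hl H0 PhiE penE.
  have hlt : (l < size t)%N by exact: hl.
  have /andP[a0 aT] := allP H0 _ (mem_nth 0 (ltnW hl)).
  have /andP[b0 bT] := allP H0 _ (mem_nth 0 hl).
  rewrite G_subdiv // in PhiE.
  have [short|long] := ltP (nth 0 (x :: t) l.+1 - nth 0 (x :: t) l) eps2.
    have PhiE' : Phi n.+1 = Phi n.
      have hc := @cpot_short _ _ _ _ e0 short; lra.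
    have penE' : pen n.+1 = pen n.
      apply: funext => th; rewrite penE.
      have hc := @hyb_split _ _ _ _ _ _ e0 short (introT andP (conj a0 aT)) (introT andP (conj b0 bT)) (hint tr th trS).
      rewrite !hyb_sumE G_subdiv //; lra.
    by rewrite PhiE'; split; [exact: lexx | left].
  have := @cpot_long _ _ _ _ e0 long.
  split; [|right]; rewrite PhiE; lra.
have Phi0 : forall n, 0 <= Phi n.
  move=> n; apply: sumr_ge0 => tr _; apply: sumr_ge0 => i _; exact: cpot_ge0.
have mono : forall n k, Phi (n + k)%N <= Phi n.
  move=> n; elim=> [|k IH]; first by rewrite addn0 lexx.
  rewrite addnS; exact: le_trans (proj1 (step _)) IH.
case: (pselect (exists N, forall n, (N <= n)%N -> pen n.+1 = pen n)) => // Hn.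
have inf : forall N, exists n, (N <= n)%N /\ pen n.+1 <> pen n.
  move=> N; apply: contrapT => h; apply: Hn; exists N => n Nn.
  apply: contrapT => hne; apply: h; exists n; exact: (conj Nn hne).
have dec : forall k : nat, exists n, Phi n <= Phi 0%N - k%:R * eps2.
  elim=> [|k [n hn]]; first by exists 0%N; rewrite mul0r subr0 lexx.
  have [m [nm hm]] := inf n.
  exists m.+1.
  have [_ [//|h]] := step m.
  have hmn : Phi m <= Phi n by rewrite -(subnKC nm); exact: mono.
  rewrite -natr1 mulrDl mul1r; lra.
have [n hn] := dec (Num.bound (Phi 0%N / eps2)).
have hb := archi_boundP (divr_ge0 (Phi0 0%N) (ltW e0)).
rewrite ltr_pdivrMr // in hb.
have := Phi0 n; lra.
Qed.
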